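(* Let $X:=\{x_i\}_{i\in[n]}$ be points in $\mathbb{R}^d$, identified with the $d\times n$ matrix with columns $x_i$, let $k\ge1$, and let $P\in\mathbb{R}^{d\times d}$ be any orthogonal projection matrix. Then \[\min_{Z\in\mathcal{Z}(n,k)}\frac12\operatorname{tr}(D_XZ)\ge \|PX\|_F^2-k\|PX\|_{2\to2}^2.\]
   Context: $D_X\in\mathbb{R}^{n\times n}$ has entries $(D_X)_{ij}=\|x_i-x_j\|^2$. $\mathcal{Z}(n,k):=\{Z\in\mathbb{R}^{n\times n}: Z\mathbf 1=\mathbf 1,\ \operatorname{tr}Z=k,\ Z\ge0\text{ entrywise},\ Z\succeq0\}$. *)

(* Defs.v *)
From HB Require Import structures.
From mathcomp Require Import all_boot all_order all_algebra.
From mathcomp Require Import classical_sets reals.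
Set Implicit Arguments. Unset Strict Implicit. Unset Printing Implicit Defensive.
Import Order.TTheory GRing.Theory Num.Theory.
Local Open Scope ring_scope.
Local Open Scope classical_set_scope.

Section Defs.
Variable R : realType.

Definition distsq_mx (d n : nat) (X : 'M[R]_(d, n)) : 'M[R]_n :=
  \matrix_(i < n, j < n) \sum_(l < d) (X l i - X l j) ^+ 2.

Definition frob2 (m n : nat) (M : 'M[R]_(m, n)) : R :=
  \sum_(i < m) \sum_(j < n) M i j ^+ 2.

Definition vnorm (n : nat) (v : 'cV[R]_n) : R := Num.sqrt (\sum_(i < n) v i 0 ^+ 2).

Definition opnorm (m n : nat) (M : 'M[R]_(m, n)) : R :=
  sup [set vnorm (M *m v) | v in [set v : 'cV[R]_n | vnorm v <= 1]].

Definition psd (n : nat) (Z : 'M[R]_n) : Prop :=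
  Z^T = Z /\ forall v : 'cV[R]_n, 0 <= (v^T *m Z *m v) 0 0.

Definition orth_proj (d : nat) (P : 'M[R]_d) : Prop := P^T = P /\ P *m P = P.

Definition Zset (n : nat) (k : R) : set 'M[R]_n :=
  [set Z | Z *m (const_mx 1 : 'cV[R]_n) = const_mx 1 /\ \tr Z = k /\
           (forall i j, 0 <= Z i j) /\ psd Z].
End Defs.

(* Main.v *)
From HB Require Import structures.
From mathcomp Require Import all_boot all_order all_algebra.
From mathcomp Require Import classical_sets reals.
From mathcomp Require Import ring lra.
Require Import Defs.
Import Order.TTheory GRing.Theory Num.Theory.
Local Open Scope ring_scope.
Section PSD.
Variable R : realType.
Variable n : nat.
Implicit Types (Z N : 'M[R]_n) (v : 'cV[R]_n).

Definition qf Z v := (v^T *m Z *m v) 0 0.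

Lemma tr11 (A : 'M[R]_1) : A^T = A.
Proof. by apply/matrixP => i j; rewrite !ord1 mxE. Qed.

Lemma qf_expand Z (m : 'I_n) v t : Z^T = Z ->
  qf Z (v + t *: delta_mx m 0) =
  qf Z v + 2 * t * ((col m Z)^T *m v) 0 0 + t ^+ 2 * Z m m.
Proof.
move=> sZ.
rewrite /qf [(_ + _)^T]linearD /= [(_ *: _)^T]linearZ /= !mulmxDl !mulmxDr -!scalemxAl -!scalemxAr.
rewrite trmx_delta -!mulmxA -colE -!rowE row_mul.
have rZ : row m Z = (col m Z)^T by rewrite tr_col sZ.
rewrite rZ -[v^T *m col m Z]tr11 trmx_mul trmxK.
rewrite !mxE expr2; ring.
Qed.

Lemma qf0 Z : qf Z 0 = 0.
Proof. by rewrite /qf mulmx0 mxE. Qed.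

Lemma psd_diag Z (m : 'I_n) : Z^T = Z -> (forall v, 0 <= qf Z v) -> 0 <= Z m m.
Proof.
move=> sZ pZ; have := pZ (0 + 1 *: delta_mx m 0).
rewrite qf_expand // qf0 mulmx0 mxE; lra.
Qed.

Lemma psd_cs Z (m : 'I_n) v : Z^T = Z -> (forall v, 0 <= qf Z v) ->
  ((col m Z)^T *m v) 0 0 ^+ 2 <= Z m m * qf Z v.
Proof.
move=> sZ pZ; set s : R := ((col m Z)^T *m v) 0 0; set q : R := qf Z v.
have q0 : 0 <= q by apply: pZ.
have := psd_diag Z m sZ pZ; rewrite le0r => /orP [/eqP Z0 | Zp].
  case: (eqVneq s 0) => [->|sn0]; first by rewrite Z0 expr0n /= mul0r.
  have := pZ (v + (- (q + 1) / (2 * s)) *: delta_mx m 0).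
  rewrite qf_expand // -/s -/q Z0 mulr0 addr0.
  have -> : 2 * (- (q + 1) / (2 * s)) * s = - (q + 1) by field.
  lra.
have := pZ (v + (- s / Z m m) *: delta_mx m 0).
rewrite qf_expand // -/s -/q.
move=> h.
have e : q + 2 * (- s / Z m m) * s + (- s / Z m m) ^+ 2 * Z m m = q - s ^+ 2 / Z m m.
  by field; rewrite gt_eqF.
have : s ^+ 2 / Z m m <= q by lra.
by rewrite ler_pdivrMr // mulrC.
Qed.

Definition redZ Z (m : 'I_n) : 'M[R]_n :=
  Z - (Z m m)^-1 *: (col m Z *m (col m Z)^T).

Lemma redZ_sym Z m : Z^T = Z -> (redZ Z m)^T = redZ Z m.
Proof.
move=> sZ; rewrite /redZ linearB /= linearZ /= trmx_mul trmxK sZ //.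
Qed.

Lemma redZ_qf Z m v : qf (redZ Z m) v = qf Z v - (Z m m)^-1 * ((col m Z)^T *m v) 0 0 ^+ 2.
Proof.
have key : (v^T *m (col m Z *m (col m Z)^T) *m v) 0 0 = ((col m Z)^T *m v) 0 0 ^+ 2.
  rewrite !mulmxA -[v^T *m col m Z]tr11 trmx_mul trmxK -mulmxA [LHS]mxE big_ord1.
  by rewrite expr2.
rewrite -key /qf /redZ mulmxBr mulmxBl -scalemxAr -scalemxAl.
set A := v^T *m Z *m v; set B := v^T *m _ *m v.
rewrite !mxE. reflexivity.
Qed.

Lemma redZ_psd Z m : Z^T = Z -> (forall v, 0 <= qf Z v) -> forall v, 0 <= qf (redZ Z m) v.
Proof.
move=> sZ pZ v; rewrite redZ_qf.
have := psd_cs Z m v sZ pZ; have := psd_diag Z m sZ pZ.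
set s : R := _ 0 0; set q := qf Z v; set a := Z m m.
rewrite le0r => /orP [/eqP -> | ap] h.
  by rewrite invr0 mul0r subr0; apply: pZ.
by rewrite subr_ge0 -(ler_pM2l ap) mulrA mulfV ?gt_eqF // mul1r.

Qed.

Lemma colT_delta Z (m j : 'I_n) : ((col m Z)^T *m (delta_mx j (0 : 'I_1) : 'cV[R]_n)) 0 0 = Z j m.
Proof.
rewrite mxE (bigD1 j) //= big1 => [|i /negbTE ne]; rewrite !mxE ?eqxx ?ne /=.
- by rewrite mulr1 addr0.
- by rewrite mulr0.
Qed.

Lemma redZ_row Z (m : 'I_n) j : Z^T = Z -> (forall v, 0 <= qf Z v) -> redZ Z m m j = 0.
Proof.
move=> sZ pZ; rewrite /redZ !mxE big_ord1 !mxE.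
have Zjm : Z j m = Z m j by rewrite -[in RHS]sZ mxE.
have := psd_cs Z m (delta_mx j (0 : 'I_1)) sZ pZ; have := psd_diag Z m sZ pZ.
rewrite colT_delta Zjm.
rewrite le0r => /orP [/eqP Z0 | ap] h.
  rewrite Z0 mul0r in h.
  have : Z m j = 0 by apply/eqP; rewrite -sqrf_eq0 eq_le h sqr_ge0.
  by move=> ->; rewrite Z0 invr0 !mul0r subr0.
by rewrite mulrA mulVf ?gt_eqF // mul1r subrr.
Qed.

Lemma redZ_tr Z m N : \tr (Z *m N) = \tr (redZ Z m *m N) + (Z m m)^-1 * qf N (col m Z).
Proof.
rewrite /redZ mulmxBl linearB /= -scalemxAl linearZ /= -mulmxA (mxtrace_mulC (col m Z)) trace_mx11.
rewrite /qf; ring.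
Qed.

Lemma psd_tr_aux N (pN : forall v, 0 <= qf N v) k : forall Z,
  (forall i j : 'I_n, (i < n - k)%N -> Z i j = 0) -> Z^T = Z ->
  (forall v, 0 <= qf Z v) -> 0 <= \tr (Z *m N).
Proof.
elim: k => [|k IH] Z hZ sZ pZ.
  have -> : Z = 0 by apply/matrixP => i j; rewrite hZ ?mxE // subn0.
  by rewrite mul0mx linear0.
case: (leqP n k) => hk.
  apply: IH => // i j hi; apply: hZ; move: hi.
  by have -> : (n - k = 0)%N by apply/eqP; rewrite subn_eq0.
have hm : (n - k.+1 < n)%N by rewrite ltn_subrL (leq_ltn_trans _ hk).
pose m := Ordinal hm.
rewrite (redZ_tr Z m N); apply: addr_ge0.
  apply: IH; [| exact: redZ_sym | exact: redZ_psd].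
  move=> i j hi.
  have [him | hie] : (i < n - k.+1)%N \/ i = m.
    case: (ltnP i (n - k.+1)) => h; [by left | right].
    by apply: val_inj => /=; apply/eqP; rewrite eqn_leq h andbT -ltnS subnSK.
  - by rewrite /redZ !mxE big_ord1 !mxE (hZ i j) // (hZ i m) // !mul0r mulr0 subr0.
  - by rewrite hie redZ_row.
apply: mulr_ge0; last exact: pN.
by rewrite invr_ge0; apply: psd_diag.
Qed.

Lemma psd_tr N Z : (forall v, 0 <= qf N v) -> Z^T = Z ->
  (forall v, 0 <= qf Z v) -> 0 <= \tr (Z *m N).
Proof.
move=> pN sZ pZ; apply: (psd_tr_aux N pN n) => // i j; by rewrite subnn.
Qed.
End PSD.
Local Open Scope classical_set_scope.
Section Norms.
Context {R : realType}.

Lemma sumsq {m : nat} (u : 'cV[R]_m) : (u^T *m u) 0 0 = \sum_i u i 0 ^+ 2.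
Proof. by rewrite mxE; apply: eq_bigr => i _; rewrite mxE expr2. Qed.

Lemma sumsq_ge0 {m : nat} (u : 'cV[R]_m) : 0 <= \sum_i u i 0 ^+ 2.
Proof. by apply: sumr_ge0 => i _; apply: sqr_ge0. Qed.

Lemma vnorm2 {m : nat} (u : 'cV[R]_m) : vnorm u ^+ 2 = \sum_i u i 0 ^+ 2.
Proof. by rewrite /vnorm sqr_sqrtr // sumsq_ge0. Qed.

Lemma vnormZ {m : nat} (a : R) (u : 'cV[R]_m) : vnorm (a *: u) = `|a| * vnorm u.
Proof.
rewrite /vnorm -sqrtr_sqr -sqrtrM ?sqr_ge0 // mulr_sumr.
by congr Num.sqrt; apply: eq_bigr => i _; rewrite mxE exprMn.
Qed.

Lemma vnorm_le_sum {m : nat} (u : 'cV[R]_m) : vnorm u <= \sum_i `|u i 0|.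
Proof.
have [h1 h2] : 0 <= \sum_i `|u i 0| /\ \sum_i u i 0 ^+ 2 <= (\sum_i `|u i 0|) ^+ 2.
  apply: (big_ind2 (fun x y => 0 <= y /\ x <= y ^+ 2)).
  - by rewrite expr0n /=.
  - move=> x1 x2 y1 y2 [h1 h2] [h3 h4]; split; first exact: addr_ge0.
    nra.
  - by move=> i _; rewrite real_normK ?num_real.
rewrite /vnorm -(ger0_norm h1) -sqrtr_sqr ler_sqrt //; exact: sqr_ge0.
Qed.

Lemma vnorm_ge0 {m : nat} (u : 'cV[R]_m) : 0 <= vnorm u.
Proof. exact: sqrtr_ge0. Qed.

Lemma vnorm_eq0 {m : nat} (u : 'cV[R]_m) : vnorm u = 0 -> u = 0.
Proof.
move=> h; have : \sum_i u i 0 ^+ 2 = 0 by rewrite -vnorm2 h expr0n.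
move/psumr_eq0P => /(_ (fun i _ => sqr_ge0 _)) hu.
apply/matrixP => i j; rewrite ord1 mxE; apply/eqP; rewrite -sqrf_eq0; apply/eqP.
exact: hu.
Qed.

Lemma opnorm_ub {m n : nat} (A : 'M[R]_(m, n)) :
  has_ubound [set vnorm (A *m v) | v in [set v : 'cV[R]_n | vnorm v <= 1]].
Proof.
exists (\sum_i \sum_j `|A i j|) => _ [v hv <-].
apply: (le_trans (vnorm_le_sum _)); apply: ler_sum => i _.
rewrite mxE; apply: (le_trans (ler_norm_sum _ _ _)); apply: ler_sum => j _.
rewrite normrM -[X in _ <= X]mulr1; apply: ler_wpM2l => //.
have h1 : v j 0 ^+ 2 <= 1.
  apply: (le_trans (y := \sum_i v i 0 ^+ 2)).
    by rewrite (bigD1 j) //= lerDl; apply: sumr_ge0 => k _; apply: sqr_ge0.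
  rewrite -vnorm2; have := vnorm_ge0 v; move: hv; rewrite /= => hv; nra.
rewrite -(real_normK (num_real (v j 0))) in h1.
have := normr_ge0 (v j 0); nra.
Qed.

Lemma opnorm_bound {m n : nat} (A : 'M[R]_(m, n)) (v : 'cV[R]_n) :
  vnorm (A *m v) <= opnorm A * vnorm v.
Proof.
have [/vnorm_eq0 -> | hpos] := eqVneq (vnorm v) 0.
  rewrite mulmx0 /vnorm.
  have -> : \sum_i (0 : 'cV[R]_m) i 0 ^+ 2 = 0 by apply: big1 => i _; rewrite mxE expr0n.
  have -> : \sum_i (0 : 'cV[R]_n) i 0 ^+ 2 = 0 by apply: big1 => i _; rewrite mxE expr0n.
  by rewrite sqrtr0 mulr0.
have sp : 0 < vnorm v by rewrite lt_def hpos vnorm_ge0.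
set u := (vnorm v)^-1 *: v.
have hu : vnorm u <= 1 by rewrite /u vnormZ ger0_norm ?invr_ge0 ?vnorm_ge0 // mulVf.
have := ub_le_sup (opnorm_ub A) (ex_intro2 _ _ u hu erefl).
rewrite -/(opnorm A) /u -scalemxAr vnormZ ger0_norm ?invr_ge0 ?vnorm_ge0 //.
by rewrite ler_pdivrMl // mulrC.
Qed.
End Norms.
Local Close Scope classical_set_scope.
Section Main.
Context {R : realType}.

Lemma sumsq' {m : nat} (u : 'cV[R]_m) : (u^T *m u) 0 0 = \sum_i u i 0 ^+ 2.
Proof. by rewrite mxE; apply: eq_bigr => i _; rewrite mxE expr2. Qed.

Lemma sumsq_ge0' {m : nat} (u : 'cV[R]_m) : 0 <= \sum_i u i 0 ^+ 2.
Proof. by apply: sumr_ge0 => i _; apply: sqr_ge0. Qed.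

Lemma proj_le {d : nat} (P : 'M[R]_d) (w : 'cV[R]_d) : P^T = P -> P *m P = P ->
  \sum_l (P *m w) l 0 ^+ 2 <= \sum_l w l 0 ^+ 2.
Proof.
move=> sP iP.
have e : (w - P *m w)^T *m (w - P *m w) = w^T *m w - (P *m w)^T *m (P *m w).
  rewrite [(w - _)^T]linearB /= !trmx_mul sP !mulmxBl !mulmxBr -!mulmxA.
  by rewrite [P *m (P *m w)]mulmxA iP subrr subr0.
have := sumsq_ge0' (w - P *m w); rewrite -!sumsq' e.
set M := w^T *m w; set N := (P *m w)^T *m (P *m w).
by rewrite !mxE subr_ge0.
Qed.

Lemma sqd {d : nat} (a b : 'I_d -> R) :
  \sum_l (a l - b l) ^+ 2 = \sum_l a l ^+ 2 + \sum_l b l ^+ 2 - 2 * \sum_l (a l * b l).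
Proof.
rewrite mulr_sumr -big_split -sumrB /=; apply: eq_bigr => l _; ring.
Qed.
Lemma entry_lin (a : R) (M1 M2 : 'M[R]_(1,1)) : (a *: M1 - M2) 0 0 = a * M1 0 0 - M2 0 0.
Proof. by rewrite !mxE. Qed.
End Main.

Theorem lemma18 (R : realType) (d n k : nat) (X : 'M[R]_(d, n)) (P : 'M[R]_d) :
  (1 <= k)%N -> orth_proj P ->
  forall Z : 'M[R]_n, @Zset R n k%:R Z ->
    2^-1 * \tr (distsq_mx X *m Z) >= frob2 (P *m X) - k%:R * opnorm (P *m X) ^+ 2.
Proof.
move=> _ [sP iP] Z [Z1 [trZ [Zge0 [sZ pZ]]]].
set A := P *m X; set c := opnorm A ^+ 2.
have sZe : forall i j, Z j i = Z i j by move=> i j; rewrite -[in LHS]sZ mxE.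
have rs : forall i, \sum_j Z i j = 1.
  move=> i; have := congr1 (fun M : 'cV[R]_n => M i 0) Z1; rewrite !mxE => <-.
  by apply: eq_bigr => j _; rewrite mxE mulr1.
have cs : forall i, \sum_j Z j i = 1.
  by move=> i; rewrite -(rs i); apply: eq_bigr => j _; rewrite sZe.
set S := \tr (Z *m (A^T *m A)).
have step1 : \tr (distsq_mx X *m Z) >=
    \sum_i \sum_j (\sum_l (A l i - A l j) ^+ 2) * Z j i.
  rewrite /mxtrace; apply: ler_sum => i _; rewrite mxE; apply: ler_sum => j _.
  rewrite mxE; apply: ler_wpM2r => //.
  have := proj_le P (col i X - col j X) sP iP.
  have -> : \sum_l (P *m (col i X - col j X)) l 0 ^+ 2 = \sum_l (A l i - A l j) ^+ 2.
    apply: eq_bigr => l _; congr (_ ^+ 2); rewrite /A !mxE -sumrB.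
    by under eq_bigr do rewrite !mxE mulrBr.
  move=> h; apply: (le_trans h); rewrite le_eqVlt; apply/orP; left; apply/eqP.
  by apply: eq_bigr => l _; rewrite !mxE.
have step3 : \sum_i \sum_j (\sum_l (A l i - A l j) ^+ 2) * Z j i =
    2 * frob2 A - 2 * S.
  have T1 : \sum_i \sum_j (\sum_l A l i ^+ 2) * Z j i = frob2 A.
    rewrite /frob2 [in RHS]exchange_big /=; apply: eq_bigr => i _.
    by rewrite -mulr_sumr cs mulr1.
  have T2 : \sum_i \sum_j (\sum_l A l j ^+ 2) * Z j i = frob2 A.
    rewrite exchange_big /frob2 [in RHS]exchange_big /=; apply: eq_bigr => j _.
    by rewrite -mulr_sumr rs mulr1.
  have T3 : \sum_i \sum_j (\sum_l A l i * A l j) * Z j i = S.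
    rewrite /S /mxtrace; apply: eq_bigr => i _; rewrite mxE; apply: eq_bigr => j _.
    rewrite sZe mulrC mxE; congr (_ * _); apply: eq_bigr => l _.
    by rewrite [_^T _ _]mxE mulrC.
  transitivity (\sum_i \sum_j (\sum_l A l i ^+ 2) * Z j i +
      \sum_i \sum_j (\sum_l A l j ^+ 2) * Z j i -
      2 * \sum_i \sum_j (\sum_l A l i * A l j) * Z j i).
    rewrite mulr_sumr -big_split -sumrB /=; apply: eq_bigr => i _.
    rewrite mulr_sumr -big_split -sumrB /=; apply: eq_bigr => j _.
    rewrite (sqd (fun l => A l i) (fun l => A l j)); ring.
  rewrite T1 T2 T3; ring.
have step4 : S <= c * k%:R.
  clearbody A.
  pose N : 'M[R]_n := c%:M - A^T *m A.
  have pN : forall v, 0 <= @qf R n N v.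
    move=> v; rewrite /qf /N mulmxBr mulmxBl scalar_mxC mul_scalar_mx -scalemxAl.
    have -> : v^T *m (A^T *m A) *m v = (A *m v)^T *m (A *m v) by rewrite trmx_mul !mulmxA.
    set M1 := v^T *m v; set M2 := (A *m v)^T *m (A *m v).
    rewrite entry_lin !sumsq -!vnorm2 /c.
    have h1 := opnorm_bound A v; have h2 := vnorm_ge0 (A *m v).
    set x := vnorm (A *m v) in h1 h2 *; set y := opnorm A in h1 *; set z := vnorm v in h1 *.
    have h3 : x ^+ 2 <= (y * z) ^+ 2 by rewrite -subr_ge0 subr_sqr; apply: mulr_ge0; lra.
    rewrite exprMn in h3; lra.
  have := @psd_tr R n N Z pN sZ pZ.
  rewrite /N mulmxBr scalar_mxC mul_scalar_mx linearB /= linearZ /= trZ -/S.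
  by rewrite subr_ge0 mulrC.
rewrite step3 in step1.
rewrite [k%:R * c]mulrC.
set T := \tr _ in step1 *.
lra.
Qed.
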